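(* If $\|g\|_{L^\infty(\mathbb{R}^n)}\le\kappa_3/2$, then for every set $F\subseteq\mathbb{R}^n$ and every $R>1$, $$\mathcal E(F,B_R):=\iint_{B_R\times\mathbb{R}^n}\chi_F(x)\chi_{F^c}(y)K(x,y)\,dx\,dy+\int_{\mathcal Q(B_R)_1\cap F}g(x)\,dx\ \ge\ 0.$$
   Context: Standing assumptions: $n\ge2$, $Q=(0,1)^n$. The kernel $K:\mathbb{R}^n\times\mathbb{R}^n\to[0,\infty)$ is measurable and satisfies: (K1) $K(y,x)=K(x,y)=K(x+w,y+w)=K(Rx,Ry)$ for all $x,y,w\in\mathbb{R}^n$ and all $R\in SO(n)$; (K2) $\int_{\mathbb{R}^n}|h|\,K(h,0)\,dh<\infty$; (K3) there are constants $0<s_1<\tfrac12<s_2<1$, $\delta>0$ and $0<\kappa_1\le\kappa_2$ such that $\kappa_1\,\chi_{(0,\delta)}(|x-y|)\,|x-y|^{-n-2s_1}\le K(x,y)\le\kappa_2\min\{|x-y|^{-n-2s_1},|x-y|^{-n-2s_2}\}$ for all $x\neq y$; (K4) $\inf_{(x,y)\in Q\times Q}K(x,y)\ge\kappa_3$ for some constant $\kappa_3>0$. The forcing term $g\in L^\infty(\mathbb{R}^n)$ is $\mathbb{Z}^n$-periodic with $\int_Q g(x)\,dx=0$. $B_R$ is the open ball of radius $R$ centered at the origin, $F^c=\mathbb{R}^n\setminus F$, and $\mathcal Q(B_R)_1$ is the union of all cubes $k+Q$, $k\in\mathbb{Z}^n$, contained in $B_R$. *)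

(* Defs.v *)
(* R^n is modelled as n.-tuple R,
   which carries the library's product (coordinate) sigma-algebra. *)
From HB Require Import structures.
From mathcomp Require Import all_boot all_order all_algebra.
From mathcomp Require Import all_classical all_reals all_analysis ess_sup_inf.
Set Implicit Arguments. Unset Strict Implicit. Unset Printing Implicit Defensive.
Import Order.TTheory GRing.Theory Num.Theory.
Local Open Scope ring_scope.
Local Open Scope classical_set_scope.

Section Rn.
Context {R : realType} {n : nat}.

Definition vzero : n.-tuple R := [tuple (0 : R) | i < n].
Definition vadd (x y : n.-tuple R) : n.-tuple R :=
  [tuple tnth x i + tnth y i | i < n].
Definition vsub (x y : n.-tuple R) : n.-tuple R :=
  [tuple tnth x i - tnth y i | i < n].
Definition enorm (x : n.-tuple R) : R := Num.sqrt (\sum_(i < n) tnth x i ^+ 2).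
Definition intvec (k : n.-tuple int) : n.-tuple R :=
  [tuple (tnth k i)%:~R | i < n].
Definition is_SO (M : 'M[R]_n) : Prop := M^T *m M = 1%:M /\ \det M = 1.
Definition rotv (M : 'M[R]_n) (x : n.-tuple R) : n.-tuple R :=
  [tuple \sum_(j < n) M i j * tnth x j | i < n].

Definition cubeQ : set (n.-tuple R) := [set x | forall i, 0 < tnth x i < 1].
Definition cube_at (k : n.-tuple int) : set (n.-tuple R) :=
  [set x | exists2 q, cubeQ q & x = vadd (intvec k) q].
Definition ballO (r : R) : set (n.-tuple R) := [set x | enorm x < r].
Definition cubes_in_ball (r : R) : set (n.-tuple R) :=
  [set x | exists k : n.-tuple int, cube_at k `<=` ballO r /\ cube_at k x].

Definition is_lebesgue_Rn (mu : {measure set (n.-tuple R) -> \bar R}) : Prop :=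
  forall a b : n.-tuple R, (forall i, tnth a i <= tnth b i) ->
    mu [set x | forall i, tnth a i < tnth x i <= tnth b i] =
    (\prod_(i < n) (tnth b i - tnth a i))%:E.

End Rn.

(* Main.v *)
Require Import Defs.
From HB Require Import structures.
From mathcomp Require Import all_boot all_order all_algebra.
From mathcomp Require Import all_classical all_reals all_analysis ess_sup_inf.
From mathcomp Require Import ring lra measurable_realfun zify.
Import Order.TTheory GRing.Theory Num.Theory.
Local Open Scope ring_scope.
Local Open Scope classical_set_scope.

Section G.
Context d (T : measurableType d) (R : realType) (mu : {measure set T -> \bar R}).
Local Open Scope ereal_scope.

Lemma nm_le_integral (D : set T) (f1 f2 : T -> \bar R) :
  (forall x, D x -> 0 <= f1 x) -> (forall x, D x -> f1 x <= f2 x) ->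
  \int[mu]_(x in D) f1 x <= \int[mu]_(x in D) f2 x.
Proof.
move=> f10 f12.
have f20 : forall x, D x -> 0 <= f2 x by move=> x Dx; exact: le_trans (f10 x Dx) (f12 x Dx).
rewrite (ge0_integralE mu f10) (ge0_integralE mu f20).
apply: ereal_sup_le => _ [h hle <-]; exists h => //= x.
apply: le_trans (hle x) _; rewrite /patch; case: ifP => // /set_mem Dx.
exact: f12.
Qed.

Lemma nm_subset_integral (A B : set T) (f : T -> \bar R) :
  A `<=` B -> (forall x, B x -> 0 <= f x) ->
  \int[mu]_(x in A) f x <= \int[mu]_(x in B) f x.
Proof.
move=> AB f0; rewrite (integral_mkcond A) (integral_mkcond B).
apply: nm_le_integral => x _; rewrite /patch.
- by case: ifP => // /set_mem /AB /f0.
case: ifP => [/set_mem Ax|_]; first by rewrite ifT //; exact/mem_set/AB.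
by case: ifP => // /set_mem /f0.
Qed.
End G.

Section Boxes.
Context {R : realType} {n : nat}.
Implicit Types a b x : n.-tuple R.

Definition box a b : set (n.-tuple R) :=
  [set x | forall i, tnth a i < tnth x i <= tnth b i].
Definition boxes : set (set (n.-tuple R)) :=
  [set B | exists ab : n.-tuple R * n.-tuple R, B = box ab.1 ab.2].

Lemma box_measurable a b : measurable (box a b).
Proof.
have -> : box a b = \bigcap_(i in [set: 'I_n])
    ((fun x => tnth x i) @^-1` `]tnth a i, tnth b i]).
  apply/seteqP; split => x /=.
    by move=> h i _; rewrite /= in_itv /=; exact: h.
  by move=> h i; have := h i I; rewrite /= in_itv.
apply: fin_bigcap_measurable => [|i _]; first exact: finite_finset.
rewrite -[X in measurable X]setTI; exact: measurable_tnth.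
Qed.

Lemma tuple_bound x : exists m : nat, forall j, - (m%:R) < tnth x j <= m%:R.
Proof.
set M := \sum_(j < n) `|tnth x j|.
have M0 : 0 <= M by apply: sumr_ge0 => j _.
exists (Num.bound M) => j.
have hj : `|tnth x j| <= M.
  by rewrite /M (bigD1 j) //= lerDl; apply: sumr_ge0.
have := archi_boundP M0 => hb.
have := le_lt_trans hj hb; rewrite ltr_norml => /andP[h1 h2].
by rewrite h1 ltW.
Qed.

Definition cbox (m : nat) : set (n.-tuple R) :=
  box [tuple - (m%:R) | i < n] [tuple (m%:R : R) | i < n].

Lemma cbox_cover : \bigcup_m cbox m = setT.
Proof.
apply/seteqP; split => // x _.
have [m hm] := tuple_bound x; exists m => // i.
by rewrite !tnth_mktuple; exact: hm.
Qed.

Definition ebox (i : 'I_n) (c : R) (m : nat) : n.-tuple R :=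
  [tuple if j == i then c else - (m%:R) | j < n].
Definition fbox (i : 'I_n) (c : R) (m : nat) : n.-tuple R :=
  [tuple if j == i then c else (m%:R) | j < n].

Lemma coor_oc i (a b : R) : (fun x : n.-tuple R => tnth x i) @^-1` `]a, b] =
  \bigcup_m box (ebox i a m) (fbox i b m).
Proof.
apply/seteqP; split => x /=.
  rewrite in_itv /= => hx.
  have [m hm] := tuple_bound x; exists m => // j.
  rewrite !tnth_mktuple; case: eqP => [->|_] //; exact: hm.
move=> [m _ h]; have := h i; rewrite !tnth_mktuple eqxx.
by rewrite in_itv.
Qed.

Lemma boxes_measurable : measurable = <<s boxes >>.
Proof.
apply/seteqP; split; last first.
  apply: smallest_sub; first exact: sigma_algebra_measurable.
  by move=> _ [[a b] ->]; exact: box_measurable.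
have H i : forall B : set R, measurable B ->
    <<s boxes >> ((fun x : n.-tuple R => tnth x i) @^-1` B).
  have sP : sigma_algebra setT
      [set B : set R | <<s boxes >> ((fun x : n.-tuple R => tnth x i) @^-1` B)].
    split.
    - by rewrite /= preimage_set0; exact: sigma_algebra0.
    - move=> A /= hA; rewrite setTD preimage_setC -setTD.
      exact: sigma_algebraCD.
    - by move=> A hA /=; rewrite preimage_bigcup; exact: sigma_algebra_bigcup.
  apply: smallest_sub => //.
  move=> B /= /ocitvP [->|[[a b] /= _ ->]].
    by rewrite preimage_set0; exact: sigma_algebra0.
  rewrite coor_oc; apply: sigma_algebra_bigcup => m.
  by apply: sub_sigma_algebra; exists (ebox i a m, fbox i b m).
apply: smallest_sub; first exact: smallest_sigma_algebra.
rewrite -bigcup_seq => A [i _ [B mB <-]].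
by rewrite setTI; exact: H.
Qed.

End Boxes.

Section Transl.
Context {R : realType} {n : nat}.
Variable mu : {measure set (n.-tuple R) -> \bar R}.
Hypothesis hmu : is_lebesgue_Rn mu.

Lemma measurable_vsub (v : n.-tuple R) :
  measurable_fun [set: n.-tuple R] (fun x => vsub x v).
Proof.
apply/measurable_fun_tnthP => i.
have -> : ((fun x : n.-tuple R => tnth x i) \o (fun x => vsub x v)) = (fun x => tnth x i - tnth v i).
  by apply/funext => x; rewrite /= /vsub tnth_mktuple.
apply: measurable_realfun.measurable_funB => //; exact: measurable_tnth.
Qed.

Lemma preimage_vsub_box (v a b : n.-tuple R) :
  (fun x => vsub x v) @^-1` box a b = box (vadd a v) (vadd b v).
Proof.
apply/seteqP; split => x /= h i; have := h i;
  rewrite /vsub /vadd !tnth_mktuple.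
- by rewrite ltrBrDr lerBlDr.
- by rewrite ltrBrDr lerBlDr.
Qed.

Lemma box_empty (a b : n.-tuple R) i : tnth b i < tnth a i -> box a b = set0.
Proof.
move=> hi; apply/seteqP; split => // x /= /(_ i) /andP[h1 h2].
by have := lt_le_trans h1 h2; rewrite ltNge (ltW hi).
Qed.

Lemma mu_box_transl (v a b : n.-tuple R) : mu (box (vadd a v) (vadd b v)) = mu (box a b).
Proof.
have [hab|] := pselect (forall i, tnth a i <= tnth b i).
  rewrite /box hmu; last first.
    by move=> i; rewrite /vadd !tnth_mktuple lerD2r.
  rewrite hmu //; congr (_%:E); apply: eq_bigr => i _.
  by rewrite /vadd !tnth_mktuple; ring.
move=> /existsNP [i /negP]; rewrite -ltNge => hi.
rewrite (@box_empty a b i hi) (@box_empty (vadd a v) (vadd b v) i) ?measure0 //.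
by rewrite /vadd !tnth_mktuple ltrD2r.
Qed.

Lemma boxes_setI : setI_closed (@boxes R n).
Proof.
move=> _ _ [[a b] ->] [[a' b'] ->] /=.
exists ([tuple Num.max (tnth a i) (tnth a' i) | i < n],
        [tuple Num.min (tnth b i) (tnth b' i) | i < n]) => /=.
apply/seteqP; split => x /=.
  by move=> [h1 h2] i; rewrite !tnth_mktuple gt_max le_min;
   case/andP: (h1 i) => -> ->; case/andP: (h2 i) => -> ->.
move=> h; split => i; have := h i; rewrite !tnth_mktuple gt_max le_min;
  by case/andP => /andP[? ?] /andP[? ?]; apply/andP.
Qed.

Lemma mu_transl (v : n.-tuple R) A : measurable A -> mu ((fun x => vsub x v) @^-1` A) = mu A.
Proof.
move=> mA.
have mv := measurable_vsub v.
apply: (@measure_unique _ R _ boxes (@cbox R n) boxes_measurable boxes_setI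
  _ cbox_cover (pushforward mu (fun x => vsub x v)) mu) => //.
- by move=> m; exists ([tuple - (m%:R) | i < n], [tuple (m%:R : R) | i < n]).
- move=> _ [[a b] ->].
  change (mu ((fun x => vsub x v) @^-1` box a b) = mu (box a b)).
  by rewrite preimage_vsub_box mu_box_transl.
- move=> m; change (mu ((fun x => vsub x v) @^-1` cbox m) < +oo)%E.
  rewrite preimage_vsub_box mu_box_transl /cbox hmu ?ltry //.
  by move=> i; rewrite !tnth_mktuple -(lerD2r (m%:R)) addNr; apply: addr_ge0.
Qed.

End Transl.

Section Cubes.
Context {R : realType} {n : nat}.
Variable mu : {measure set (n.-tuple R) -> \bar R}.
Hypothesis hmu : is_lebesgue_Rn mu.

Lemma cubeQ_measurable : measurable (@cubeQ R n).
Proof.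
have -> : @cubeQ R n = \bigcap_(i in [set: 'I_n])
    ((fun x => tnth x i) @^-1` `]0, 1[).
  apply/seteqP; split => x /=.
    by move=> h i _; rewrite /= in_itv /=; exact: h.
  by move=> h i; have := h i I; rewrite /= in_itv.
apply: fin_bigcap_measurable => [|i _]; first exact: finite_finset.
rewrite -[X in measurable X]setTI; exact: measurable_tnth.
Qed.

Lemma cube_atE (k : n.-tuple int) :
  cube_at k = (fun x => vsub x (intvec k)) @^-1` (@cubeQ R n).
Proof.
apply/seteqP; split => x /=.
  move=> [q hq ->]; have -> : vsub (vadd (intvec k) q) (intvec k) = q.
    by apply: eq_from_tnth => i; rewrite /vsub /vadd !tnth_mktuple; lra.
  exact: hq.
move=> hq; exists (vsub x (intvec k)) => //.
by apply: eq_from_tnth => i; rewrite /vsub /vadd !tnth_mktuple; lra.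
Qed.

Lemma cube_at_measurable k : measurable (@cube_at R n k).
Proof.
rewrite cube_atE -[X in measurable X]setTI.
apply: measurable_vsub => //; exact: cubeQ_measurable.
Qed.

Definition vone : n.-tuple R := [tuple 1 | i < n].

Lemma mu_cubeQ : mu (@cubeQ R n) = 1%E.
Proof.
set H := box (@vzero R n) vone.
have mH : mu H = 1%E.
  rewrite /H /box hmu; last by move=> i; rewrite !tnth_mktuple.
  by rewrite big1 // => i _; rewrite !tnth_mktuple subr0.
have mHm : measurable H by exact: box_measurable.
set face := fun i : 'I_n => H `&` ((fun x => tnth x i) @^-1` [set 1]).
have mface i : measurable (face i).
  apply: measurableI => //; rewrite -[X in measurable X]setTI.
  exact: measurable_tnth.
have face0 i : mu (face i) = 0%E.
  apply/eqP; rewrite eq_le measure_ge0 andbT.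
  apply/lee_addgt0Pr => e e0; rewrite add0e.
  set a := [tuple if j == i then 1 - e else 0 | j < n].
  have -> : e%:E = mu (box a vone).
    rewrite /box hmu; last first.
      by move=> j; rewrite !tnth_mktuple; case: eqP => _; lra.
    rewrite (bigD1 i) //= big1 ?mulr1; last first.
      by move=> j /negbTE ji; rewrite !tnth_mktuple ji subr0.
    by rewrite !tnth_mktuple eqxx; congr (_%:E); ring.
  apply: le_measure; rewrite ?inE //; first exact: box_measurable.
  move=> x [hx /= hxi] j; rewrite !tnth_mktuple.
  have := hx j; rewrite !tnth_mktuple.
  case: eqP => [->|_] //.
  by rewrite hxi => _; apply/andP; split; lra.
have negl : mu.-negligible (\big[setU/set0]_(i <- enum 'I_n) face i).
  elim: (enum 'I_n) => [|i s IH]; first by rewrite big_nil; exact: negligible_set0.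
  rewrite big_cons; apply: negligibleU => //.
  by apply/negligibleP => //; exact: face0.
have mQ := cubeQ_measurable.
have HQ0 : mu (H `\` cubeQ) = 0%E.
  apply/negligibleP; first exact: measurableD.
  apply: negligibleS negl => x [hx /= nq].
  rewrite -bigcup_seq.
  have [i hi] : exists i, ~ (0 < tnth x i < 1).
    by apply/existsNP => h; apply: nq.
  exists i; first by rewrite /= mem_enum.
  split => //=; have := hx i; rewrite !tnth_mktuple => /andP[h1 h2].
  apply/eqP; rewrite eq_le h2 /=; rewrite leNgt; apply/negP => h3.
  by apply: hi; rewrite h1.
have QH : cubeQ `<=` H.
  by move=> x hx i; rewrite !tnth_mktuple; case/andP: (hx i) => -> /ltW ->.
have mHQ : measurable (H `\` cubeQ) by apply: measurableD.
move: mH; rewrite -(setDUK QH) measureU //; last by rewrite setDIK.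
move=> <-; apply/esym; rewrite [X in _ + X](_ : _ = 0%E) ?adde0 //; exact: HQ0.
Qed.

Lemma mu_cube_at k : mu (@cube_at R n k) = 1%E.
Proof.
by rewrite cube_atE (mu_transl _ hmu) ?mu_cubeQ //; exact: cubeQ_measurable.
Qed.

Lemma intvec_inj (k k' : n.-tuple int) x :
  @cube_at R n k x -> cube_at k' x -> k = k'.
Proof.
move=> [q hq ->] [q' hq' e]; apply: eq_from_tnth => i.
have := congr1 (fun y => tnth y i) e; rewrite /vadd !tnth_mktuple => ei.
case/andP: (hq i) => q0 q1; case/andP: (hq' i) => q0' q1'.
have h1 : (tnth k i < tnth k' i + 1)%R by rewrite -(ltr_int R) intrD; lra.
have h2 : (tnth k' i < tnth k i + 1)%R by rewrite -(ltr_int R) intrD; lra.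
by apply/eqP; rewrite eq_le -!ltzD1 h1 h2.
Qed.

End Cubes.

Section PerCube.
Context {R : realType} {n : nat}.
Variable mu : {measure set (n.-tuple R) -> \bar R}.
Hypothesis hmu : is_lebesgue_Rn mu.
Variables (g : n.-tuple R -> R) (c : R).
Hypothesis c0 : 0 <= c.
Hypothesis gmeas : measurable_fun [set: n.-tuple R] g.
Hypothesis gper : forall x (k : n.-tuple int), g (vadd x (intvec k)) = g x.
Hypothesis gmean : (\int[mu]_(x in cubeQ) (g x)%:E = 0)%E.
Hypothesis gae : \forall x \ae mu, ((`|g x|)%:E <= c%:E)%E.

Local Open Scope ereal_scope.

Lemma mgE (D : set (n.-tuple R)) : measurable_fun D (fun x => (g x)%:E).
Proof.
exact: (measurable_EFinP D g).2
  (measurable_funS measurableT (@subsetT _ D) gmeas).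
Qed.

Lemma mgaE (D : set (n.-tuple R)) : measurable_fun D (fun x => `|(g x)%:E|).
Proof. exact: measurableT_comp (@abse_measurable R setT) (mgE D). Qed.

Lemma int_abs_g_le D : measurable D ->
  \int[mu]_(x in D) `|(g x)%:E| <= c%:E * mu D.
Proof.
move=> mD; rewrite -(@integral_cst _ _ _ mu D mD c%:E).
apply: ae_ge0_le_integral.
- exact: mD.
- by move=> x _; rewrite abse_ge0.
- exact: mgaE.
- by move=> x _ /=; rewrite lee_fin.
- exact: measurable_cst.
- by apply: filterS gae => x hx _; rewrite abse_EFin.
Qed.

Lemma g_integrable D : measurable D -> mu D < +oo ->
  mu.-integrable D (fun x => (g x)%:E).
Proof.
move=> mD muD; apply/integrableP; split.
  exact: mgE.
apply: le_lt_trans (int_abs_g_le _ mD) _.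
have : mu D \is a fin_num by rewrite ge0_fin_numE.
by move/fineK <-; rewrite -EFinM ltry.
Qed.

Lemma abs_int_g_le D : measurable D ->
  `|\int[mu]_(x in D) (g x)%:E| <= c%:E * mu D.
Proof.
move=> mD; apply: le_trans (int_abs_g_le _ mD).
apply: le_abse_integral => //.
exact: mgE.
Qed.

Lemma int_cube_g (k : n.-tuple int) : \int[mu]_(x in cube_at k) (g x)%:E = 0.
Proof.
set phi := fun x : n.-tuple R => vsub x (intvec k).
have mphi : measurable_fun setT phi by exact: measurable_vsub.
have gphi x : g (phi x) = g x.
  rewrite -(gper (phi x) k); congr g.
  by apply: eq_from_tnth => i; rewrite /phi /vsub /vadd !tnth_mktuple subrK.
have mQ := @cubeQ_measurable R n.
have mg : measurable_fun setT (fun x => (g x)%:E) by exact: mgE.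
rewrite cube_atE -gmean.
transitivity (\int[mu]_(x in phi @^-1` cubeQ) ((fun y => (g y)%:E) \o phi) x).
  by apply: eq_integral => x _ /=; rewrite gphi.
rewrite -integral_pushforward //; last first.
  apply: (eq_integrable _ (fun x => (g x)%:E)).
  - by rewrite -[X in measurable X]setTI; exact: mphi.
  - by move=> x _ /=; rewrite gphi.
  apply: g_integrable; first by rewrite -[X in measurable X]setTI; exact: mphi.
  by rewrite -cube_atE mu_cube_at // ltry.
apply: eq_measure_integral => A mA _.
by change (mu (phi @^-1` A) = mu A); rewrite (mu_transl _ hmu).
Qed.

Lemma cube_estimate (k : n.-tuple int) (F : set (n.-tuple R)) : measurable F ->
  0 <= (2 * c)%:E * mu (cube_at k `&` F) * mu (cube_at k `&` ~` F)
     + \int[mu]_(x in cube_at k `&` F) (g x)%:E.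
Proof.
move=> mF; set a := mu (cube_at k `&` F); set b := mu (cube_at k `&` ~` F).
have mC := @cube_at_measurable R n k.
have mCF : measurable (cube_at k `&` F) by exact: measurableI.
have mCnF : measurable (cube_at k `&` ~` F) by apply: measurableI => //; exact: measurableC.
have hab : a + b = 1.
  rewrite /a /b -measureU //; last by rewrite setIACA setICr setI0.
  by rewrite -setIUr setUCr setIT; exact: (mu_cube_at mu hmu k).
have a0 : 0 <= a by exact: measure_ge0.
have b0 : 0 <= b by exact: measure_ge0.
have af : a \is a fin_num.
  rewrite ge0_fin_numE // (@le_lt_trans _ _ (mu (cube_at k))) //.
    by apply: le_measure; rewrite ?inE //; exact: subIsetl.
  by rewrite mu_cube_at // ltry.
have bf : b \is a fin_num.
  rewrite ge0_fin_numE // (@le_lt_trans _ _ (mu (cube_at k))) //.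
    by apply: le_measure; rewrite ?inE //; exact: subIsetl.
  by rewrite mu_cube_at // ltry.
have hsum : \int[mu]_(x in cube_at k `&` F) (g x)%:E +
            \int[mu]_(x in cube_at k `&` ~` F) (g x)%:E = 0.
  rewrite -integral_setU //.
  - by rewrite -setIUr setUCr setIT int_cube_g.
  - exact: mgE.
  - by rewrite /disj_set setIACA setICr setI0.
have h1 : `|\int[mu]_(x in cube_at k `&` F) (g x)%:E| <= c%:E * a :=
  abs_int_g_le _ mCF.
have h2 : `|\int[mu]_(x in cube_at k `&` ~` F) (g x)%:E| <= c%:E * b :=
  abs_int_g_le _ mCnF.
have i1f : \int[mu]_(x in cube_at k `&` F) (g x)%:E \is a fin_num.
  rewrite -abse_fin_num ge0_fin_numE ?abse_ge0 // (le_lt_trans h1) //.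
  by rewrite -(fineK af) -EFinM ltry.
have i2f : \int[mu]_(x in cube_at k `&` ~` F) (g x)%:E \is a fin_num.
  rewrite -abse_fin_num ge0_fin_numE ?abse_ge0 // (le_lt_trans h2) //.
  by rewrite -(fineK bf) -EFinM ltry.
move: hsum h1 h2 hab a0 b0.
rewrite -(fineK af) -(fineK bf) -(fineK i1f) -(fineK i2f).
set ra := fine a; set rb := fine b.
set r1 := fine (\int[mu]_(x in cube_at k `&` F) (g x)%:E).
set r2 := fine (\int[mu]_(x in cube_at k `&` ~` F) (g x)%:E).
rewrite !abse_EFin -!EFinM -!EFinD !lee_fin.
move=> /(congr1 fine) /= e12 h1 h2 /(congr1 fine) /= eab a0 b0.
move: h1 h2; rewrite !ler_norml => /andP[h1 h1'] /andP[h2 h2'].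
have [ha|ha] := leP ra (1/2)%R.
  have hb : (1/2 <= rb)%R by lra.
  have : (c * ra <= 2 * c * ra * rb)%R.
    have : (c * ra * 1 <= c * ra * (2 * rb))%R.
      by apply: ler_wpM2l; [exact: mulr_ge0|lra].
    by rewrite mulr1; move/le_trans; apply; rewrite le_eqVlt; apply/orP; left; apply/eqP; ring.
  lra.
have hb : (rb <= 1/2)%R by lra.
have : (c * rb <= 2 * c * ra * rb)%R.
  have : (c * rb * 1 <= c * rb * (2 * ra))%R.
    by apply: ler_wpM2l; [exact: mulr_ge0|lra].
  by rewrite mulr1; move/le_trans; apply; rewrite le_eqVlt; apply/orP; left; apply/eqP; ring.
lra.
Qed.

End PerCube.

Section Fin.
Context {R : realType} {n : nat}.

Lemma fin_bounded (m : nat) :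
  finite_set [set k : n.-tuple int | forall i, (- (m%:Z) <= (tnth k i : int) <= m%:Z)%R].
Proof.
set tau := fun t : n.-tuple 'I_(m.*2.+1) =>
  ([tuple ((nat_of_ord (tnth t i))%:Z - m%:Z)%R | i < n] : n.-tuple int).
apply: (@sub_finite_set _ _ (tau @` setT)); last first.
  exact: (finite_image tau finite_finset).
move=> k hk; exists [tuple inord (absz (tnth k i + m%:Z)%R) | i < n] => //.
apply: eq_from_tnth => i; rewrite /tau !tnth_mktuple.
have := hk i => /andP[h1 h2].
have hp : (0 <= tnth k i + m%:Z)%R by lia.
rewrite inordK; last by lia.
lia.
Qed.

Lemma vaddC (x y : n.-tuple R) : vadd x y = vadd y x.
Proof. by apply: eq_from_tnth => i; rewrite /vadd !tnth_mktuple addrC. Qed.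

Lemma coord_le_enorm (x : n.-tuple R) i : `|tnth x i| <= enorm x.
Proof.
rewrite /enorm -sqrtr_sqr ler_sqrt; last by apply: sumr_ge0 => j _; exact: sqr_ge0.
by rewrite (bigD1 i) //= lerDl; apply: sumr_ge0 => j _; exact: sqr_ge0.
Qed.

Lemma cube_ball_bound (r : R) (k : n.-tuple int) (m : nat) :
  r <= m%:R -> cube_at k `<=` ballO r ->
  forall i, (- (m%:Z) <= tnth k i <= m%:Z)%R.
Proof.
move=> rm kB i.
set h : n.-tuple R := [tuple 1/2 | i < n].
have hq : cubeQ h by move=> j; rewrite tnth_mktuple; apply/andP; split; lra.
have := kB (vadd (intvec k) h) (ex_intro2 _ _ h hq erefl).
rewrite /ballO /= => hx.
have := le_lt_trans (coord_le_enorm _ i) hx.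
rewrite /vadd /intvec !tnth_mktuple ltr_norml => /andP[l1 l2].
have e : ((m%:Z)%:~R : R) = m%:R by [].
have u1 : ((tnth k i)%:~R : R) < ((m%:Z + 1)%R)%:~R by rewrite intrD e; lra.
have u2 : ((- (m%:Z) - 1)%R%:~R : R) < (tnth k i)%:~R.
  by rewrite intrD intrN e; lra.
rewrite ltr_int in u1; rewrite ltr_int in u2.
apply/andP; split; lia.
Qed.

End Fin.

Theorem mainTheorem12 (R : realType) (n : nat) (hn : (2 <= n)%N)
  (mu : {measure set (n.-tuple R) -> \bar R}) (hmu : is_lebesgue_Rn mu)
  (K : n.-tuple R -> n.-tuple R -> R)
  (s1 s2 delta kappa1 kappa2 kappa3 : R)
  (g : n.-tuple R -> R)
  (Kmeas : measurable_fun [set: n.-tuple R * n.-tuple R] (fun p => K p.1 p.2))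
  (Kge0 : forall x y, 0 <= K x y)
  (Ksym : forall x y, K y x = K x y)
  (Ktransl : forall x y w, K (vadd x w) (vadd y w) = K x y)
  (Krot : forall (M : 'M[R]_n) x y, is_SO M -> K (rotv M x) (rotv M y) = K x y)
  (K2 : (\int[mu]_h (enorm h * K h vzero)%:E < +oo)%E)
  (hs1 : 0 < s1) (hs12 : s1 < 1/2) (hs21 : 1/2 < s2) (hs2 : s2 < 1)
  (hdelta : 0 < delta) (hk1 : 0 < kappa1) (hk12 : kappa1 <= kappa2)
  (K3 : forall x y, x != y ->
     kappa1 * (if enorm (vsub x y) < delta then 1 else 0)
       * enorm (vsub x y) `^ (- (n%:R) - 2 * s1) <= K x y /\
     K x y <= kappa2 * Num.min (enorm (vsub x y) `^ (- (n%:R) - 2 * s1))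
                               (enorm (vsub x y) `^ (- (n%:R) - 2 * s2)))
  (hk3 : 0 < kappa3)
  (K4 : forall x y, cubeQ x -> cubeQ y -> kappa3 <= K x y)
  (gmeas : measurable_fun [set: n.-tuple R] g)
  (gper : forall x (k : n.-tuple int), g (vadd x (intvec k)) = g x)
  (gmean : (\int[mu]_(x in cubeQ) (g x)%:E = 0)%E)
  (gnorm : (ess_sup mu (fun x => (`|g x|)%:E) <= (kappa3 / 2)%:E)%E) :
  forall (F : set (n.-tuple R)) (r : R), measurable F -> 1 < r ->
  (0 <= \int[mu]_(x in ballO r `&` F) \int[mu]_(y in ~` F) (K x y)%:E
        + \int[mu]_(x in cubes_in_ball r `&` F) (g x)%:E)%E.
Proof.
move=> F r mF r1.
set c := kappa3 / 2.
have c0 : 0 <= c by rewrite /c; lra.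
have c2 : 2 * c = kappa3 by rewrite /c; field.
have gae : \forall x \ae mu, ((`|g x|)%:E <= c%:E)%E by apply/ess_supP.
set A := [set k : n.-tuple int | cube_at k `<=` ballO r].
have finA : finite_set A.
  have r0 : 0 <= r by lra.
  apply: sub_finite_set (fin_bounded (Num.bound r)) => k hk.
  by apply: cube_ball_bound hk; apply: ltW; exact: archi_boundP.
set s := finmap.enum_fset (fset_set A).
have sA k : (k \in s) = (k \in A) := in_fset_set finA k.
have us : uniq s by exact: finmap.fset_uniq.
have mCF k : measurable (cube_at k `&` F) by apply: measurableI => //; exact: cube_at_measurable.
have UE : cubes_in_ball r `&` F = \big[setU/set0]_(k <- s) (cube_at k `&` F).
  rewrite bigsetU_fset_set //; apply/seteqP; split => x /=.
    by move=> [[k [kB kx]] Fx]; exists k.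
  by move=> [k kB [kx Fx]]; split => //; exists k.
have tI : trivIset [set` s] (fun k => cube_at k `&` F).
  by move=> i j _ _ [x [[hi _] [hj _]]]; exact: (intvec_inj _ _ _ hi hj).
set b := fun k => fine (mu (cube_at k `&` ~` F)).
have b0 k : 0 <= b k by apply: fine_ge0; exact: measure_ge0.
have bE k : (b k)%:E = mu (cube_at k `&` ~` F).
  rewrite /b fineK // ge0_fin_numE ?measure_ge0 //.
  rewrite (@le_lt_trans _ _ (mu (cube_at k))) //.
    apply: le_measure; last exact: subIsetl.
    - by rewrite inE; apply: measurableI; [exact: cube_at_measurable|exact: measurableC].
    - by rewrite inE; exact: cube_at_measurable.
  by rewrite (mu_cube_at mu hmu) ltry.
pose phi := fun x : n.-tuple R => \sum_(k <- s) (kappa3 * b k * \1_(cube_at k) x).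
have phiE k x : k \in s -> cube_at k x -> phi x = kappa3 * b k.
  move=> ks kx; rewrite /phi (big_rem k) //= indicE mem_set // mulr1.
  rewrite big1_seq ?addr0 // => j /andP[_]; rewrite mem_rem_uniq // inE.
  move=> /andP[jk _]; rewrite indicE memNset ?mulr0 // => jx.
  by move/eqP: jk; apply; exact: (intvec_inj _ _ _ jx kx).
have phi0 x : 0 <= phi x.
  apply: sumr_ge0 => k _; apply: mulr_ge0; first exact: mulr_ge0 (ltW hk3) (b0 k).
  by rewrite indicE.
have mphi : measurable_fun setT phi.
  apply: measurable_sum => k; apply: measurable_funM => //.
  by apply: measurable_indic; exact: cube_at_measurable.
have Kc k x y : cube_at k x -> cube_at k y -> kappa3 <= K x y.
  move=> [q hq ->] [q' hq' ->].
  by rewrite (vaddC (intvec k) q) (vaddC (intvec k) q') Ktransl; exact: K4.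
have step1 : (\int[mu]_(x in cubes_in_ball r `&` F) (phi x)%:E <=
    \int[mu]_(x in ballO r `&` F) \int[mu]_(y in ~` F) (K x y)%:E)%E.
  apply: (@le_trans _ _
    (\int[mu]_(x in cubes_in_ball r `&` F) \int[mu]_(y in ~` F) (K x y)%:E)%E);
    last first.
    apply: nm_subset_integral.
    - by move=> x [[k [kB kx]] Fx]; split => //; exact: kB.
    - by move=> x _; apply: integral_ge0 => y _; rewrite lee_fin.
  apply: nm_le_integral => [x _|x [[k [kB kx]] Fx]]; first by rewrite lee_fin.
  have ks : k \in s by rewrite sA; exact: mem_set.
  rewrite (phiE k x ks kx) EFinM bE.
  have mCnF : measurable (cube_at k `&` ~` F).
    by apply: measurableI; [exact: cube_at_measurable|exact: measurableC].
  rewrite -integral_cst //.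
  apply: (@le_trans _ _ (\int[mu]_(y in cube_at k `&` ~` F) (K x y)%:E)%E).
    apply: nm_le_integral => [y _|y [ky _]]; first by rewrite lee_fin ltW.
    by rewrite lee_fin; exact: Kc kx ky.
  apply: nm_subset_integral; first exact: subIsetr.
  by move=> y _; rewrite lee_fin.
apply: le_trans (leeD2r _ step1).
rewrite UE integral_bigsetU_EFin //; last first.
  by apply/measurable_EFinP; apply: measurable_funS mphi.
rewrite integral_bigsetU_EFin //; last by apply: mgE.
rewrite -big_split /= big_seq; apply: sume_ge0 => k ks.
have -> : (\int[mu]_(x in cube_at k `&` F) (phi x)%:E =
    (kappa3 * b k)%:E * mu (cube_at k `&` F))%E.
  rewrite -integral_cst //; apply: eq_integral => x; rewrite inE => -[kx _].
  by rewrite (phiE k x ks kx).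
have := @cube_estimate R n mu hmu g c c0 gmeas gper gmean gae k F mF.
by rewrite c2 -bE (EFinM kappa3) muleAC.
Qed.
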